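(* Let $G$ be a connected graph whose set $V_1$ of degree-one vertices is nonempty, say $V_1=\{v_1,\dots,v_i\}$. Let $G\oplus V_1'$ be the graph with vertex set $V(G)\cup\{v_1',\dots,v_i'\}$ (where $v_1',\dots,v_i'$ are new vertices) and edge set $E(G)\cup\{v_1v_1',\dots,v_iv_i'\}$. If $G$ is strongly antimagic, then $G\oplus V_1'$ is strongly antimagic.
   Context: All graphs are finite and simple. For a graph $G=(V,E)$ and a bijection $f:E\to\{1,2,\dots,|E|\}$, the vertex sum at $u$ is $\varphi_f(u)=\sum_{e\in E(u)}f(e)$, where $E(u)$ is the set of edges incident to $u$. The labeling $f$ is antimagic if $\varphi_f(u)\neq\varphi_f(v)$ for all distinct $u,v\in V$; it is strongly antimagic if it is antimagic and moreover $\deg(u)<\deg(v)$ implies $\varphi_f(u)<\varphi_f(v)$. A graph is strongly antimagic if it admits a strongly antimagic labeling. $V_k$ denotes the set of vertices of degree $k$. *)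

(* Defs.v *)
(* A simple graph is a symmetric irreflexive relation e on a finType V. *)
From mathcomp Require Import all_boot.
Set Implicit Arguments. Unset Strict Implicit. Unset Printing Implicit Defensive.

Definition edges (V : finType) (e : rel V) : {set {set V}} :=
  [set A : {set V} | [exists x, exists y, e x y && (A == [set x; y])]].

Definition deg (V : finType) (e : rel V) (u : V) : nat := #|[set v | e u v]|.

Definition is_labeling (V : finType) (e : rel V) (f : {set V} -> nat) : Prop :=
  [/\ {in edges e &, injective f},
      (forall A, A \in edges e -> 1 <= f A <= #|edges e|) &
      (forall k, 1 <= k <= #|edges e| -> exists2 A, A \in edges e & f A = k)].

Definition vsum (V : finType) (e : rel V) (f : {set V} -> nat) (u : V) : nat :=
  \sum_(A in edges e | u \in A) f A.

Definition strongly_antimagic_labeling (V : finType) (e : rel V)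
  (f : {set V} -> nat) : Prop :=
  [/\ is_labeling e f,
      (forall u v : V, u != v -> vsum e f u != vsum e f v) &
      (forall u v : V, deg e u < deg e v -> vsum e f u < vsum e f v)].

Definition strongly_antimagic (V : finType) (e : rel V) : Prop :=
  exists f, strongly_antimagic_labeling e f.

(* Vertices of G (+) V1': old vertices inl x, plus a new vertex inr x for each
   degree-one vertex x of G. *)
Definition ext_pred (V : finType) (e : rel V) : pred (V + V) :=
  fun w => match w with inl _ => true | inr x => deg e x == 1 end.

Definition ext_vert (V : finType) (e : rel V) : finType := {w : V + V | ext_pred e w}.

Definition ext_rel (V : finType) (e : rel V) : rel (ext_vert e) :=
  fun u w => match val u, val w with
             | inl x, inl y => e x y
             | inl x, inr y => x == y
             | inr x, inl y => x == y
             | inr _, inr _ => false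
             end.
Arguments ext_rel {V} e.

(* Main.v *)
Require Import Defs.
From mathcomp Require Import all_boot.
From mathcomp Require Import zify.

Lemma surj_of_inj (T : finType) (S : {set T}) (g : T -> nat) :
  {in S &, injective g} -> (forall A, A \in S -> 1 <= g A <= #|S|) ->
  forall k, 1 <= k <= #|S| -> exists2 A, A \in S & g A = k.
Proof.
move=> gi gr k hk.
have U : uniq (map g (enum S)) by rewrite map_inj_in_uniq ?enum_uniq // => x y; rewrite !mem_enum; apply: gi.
have sub : {subset map g (enum S) <= iota 1 #|S|}.
  move=> y /mapP [x]; rewrite mem_enum => xS ->; rewrite mem_iota.
  have := gr x xS; lia.
have sz : size (iota 1 #|S|) <= size (map g (enum S)) by rewrite size_map size_iota -cardE.
have [_ E] := uniq_min_size U sub sz.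
have : k \in map g (enum S) by rewrite E mem_iota; lia.
by case/mapP=> x; rewrite mem_enum => xS ->; exists x.
Qed.

Lemma deg_edges (V : finType) (e : rel V) (e_sym : symmetric e) (e_irr : irreflexive e) (u : V) :
  deg e u = #|[set A in edges e | u \in A]|.
Proof.
have -> : [set A in edges e | u \in A] = (fun v => [set u; v]) @: [set v | e u v].
  apply/setP => A; rewrite inE; apply/andP/imsetP.
    case; rewrite /edges inE => /existsP [x /existsP [y /andP [exy /eqP ->]]].
    rewrite !inE => /orP [] /eqP ->.
      by exists y; rewrite ?inE.
    by exists x; [rewrite inE e_sym | rewrite setUC].
  case=> v; rewrite inE => euv ->; split; last by rewrite !inE eqxx.
  by rewrite /edges inE; apply/existsP; exists u; apply/existsP; exists v; rewrite euv eqxx.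
rewrite card_in_imset // => v w; rewrite !inE => euv euw E.
have : v \in [set u; w] by rewrite -E !inE eqxx orbT.
rewrite !inE => /orP [/eqP vu|/eqP //].
by move: euv; rewrite vu e_irr.
Qed.
Arguments deg_edges {V e} e_sym e_irr u.

Section Ext.
Variables (V : finType) (e : rel V).
Hypotheses (e_sym : symmetric e) (e_irr : irreflexive e).
Local Notation W := (ext_vert e).

Definition inl_w (x : V) : W := exist _ (inl x) isT.
Definition inr_w (x : V) : W := insubd (inl_w x) (inr x).
Definition pnew (x : V) : {set W} := [set inl_w x; inr_w x].
Definition V1 := [set x | deg e x == 1].
Definition oldE := [set inl_w @: B | B : {set V} in edges e].
Definition newE := [set pnew x | x in V1].

Lemma val_inr x : deg e x == 1 -> val (inr_w x) = inr x.
Proof. by move=> h; rewrite /inr_w insubdK. Qed.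

Lemma inl_inj : injective inl_w.
Proof. by move=> x y /(congr1 val) [->]. Qed.

Lemma inl_neq_inr x y : deg e y == 1 -> (inl_w x == inr_w y) = false.
Proof. by move=> h; apply/negbTE/eqP => /(congr1 val); rewrite val_inr. Qed.

Lemma inr_eq x y : deg e x == 1 -> deg e y == 1 -> (inr_w x == inr_w y) = (x == y).
Proof.
move=> hx hy; apply/eqP/eqP => [/(congr1 val)|->//].
by rewrite !val_inr // => -[].
Qed.

Lemma ext_sym : symmetric (ext_rel e).
Proof. by move=> [[x|x] px] [[y|y] py]; rewrite /ext_rel /=; first rewrite e_sym; rewrite // eq_sym. Qed.

Lemma ext_irr : irreflexive (ext_rel e).
Proof. by move=> [[x|x] px]; rewrite /ext_rel /= ?e_irr. Qed.

Lemma W_cases (w : W) : (exists x, w = inl_w x) \/ (exists2 x, deg e x == 1 & w = inr_w x).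
Proof.
case: w => [[x|x] px]; [left; exists x | right; exists x => //].
  by apply: val_inj.
by apply: val_inj; rewrite val_inr.
Qed.

Lemma edgesE : edges (ext_rel e) = oldE :|: newE.
Proof.
apply/setP => A; rewrite /edges inE; apply/existsP/setUP.
  case=> u /existsP [w /andP [ruw /eqP ->]]; move: ruw.
  case: (W_cases u) => [[x ->]|[x hx ->]]; case: (W_cases w) => [[y ->]|[y hy ->]].
  - move=> exy; left; apply/imsetP; exists [set x; y].
      by rewrite /edges inE; apply/existsP; exists x; apply/existsP; exists y; rewrite [e x y]exy eqxx.
    by rewrite imsetU1 imset_set1.
  - rewrite /ext_rel /= val_inr // => /eqP exy; subst y.
    by right; rewrite /newE; apply/imsetP; exists x; rewrite ?inE.
  - rewrite /ext_rel /= val_inr // => /eqP exy; subst y.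
    right; rewrite /newE; apply/imsetP; exists x; first by rewrite inE.
    by rewrite /pnew setUC.
  - by rewrite /ext_rel /= !val_inr.
case=> /imsetP.
  case=> B; rewrite /edges inE => /existsP [x /existsP [y /andP [exy /eqP ->]]] ->.
  exists (inl_w x); apply/existsP; exists (inl_w y).
  by rewrite imsetU1 imset_set1 eqxx andbT.
case=> x; rewrite inE => hx ->; exists (inl_w x); apply/existsP; exists (inr_w x).
by rewrite /ext_rel /= val_inr // !eqxx.
Qed.

Lemma inr_notin_old x (B : {set V}) : deg e x == 1 -> inr_w x \notin inl_w @: B.
Proof. by move=> hx; apply/imsetP => -[y _ /eqP]; rewrite eq_sym inl_neq_inr. Qed.

Lemma disj : [disjoint oldE & newE].
Proof.
rewrite -setI_eq0; apply/eqP/setP => A; rewrite !inE.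
apply/andP => -[/imsetP [B _ ->] /imsetP [x]]; rewrite inE => hx /setP /(_ (inr_w x)).
by rewrite !inE eqxx orbT (negbTE (inr_notin_old x B hx)).
Qed.

Lemma pnew_inj : {in V1 &, injective pnew}.
Proof.
move=> x y; rewrite !inE => hx hy /setP /(_ (inr_w x)).
rewrite !inE eqxx orbT [inr_w x == _]eq_sym inl_neq_inr // inr_eq // => /esym/eqP //.
Qed.

Lemma sum_ext (h : {set W} -> nat) w :
  \sum_(A in edges (ext_rel e) | w \in A) h A =
  \sum_(B in edges e | w \in inl_w @: B) h (inl_w @: B) +
  \sum_(x in V1 | w \in pnew x) h (pnew x).
Proof.
rewrite edgesE big_mkcondr /= (eq_bigl [predU oldE & newE]); last first.
  by move=> A; rewrite !inE.
rewrite bigU; last exact: disj.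
rewrite -!big_mkcondr /oldE /newE.
rewrite (big_imset_cond _ _ _ (in2W (imset_inj inl_inj))).
by rewrite (big_imset_cond _ _ _ pnew_inj).
Qed.

Lemma old_part (h : {set W} -> nat) x :
  \sum_(B in edges e | inl_w x \in inl_w @: B) h (inl_w @: B) =
  \sum_(B in edges e | x \in B) h (inl_w @: B).
Proof. by apply: eq_bigl => B; rewrite (mem_imset _ _ inl_inj). Qed.

Lemma old_part_inr (h : {set W} -> nat) x : deg e x == 1 ->
  \sum_(B in edges e | inr_w x \in inl_w @: B) h (inl_w @: B) = 0.
Proof.
by move=> hx; rewrite big_pred0 // => B; rewrite (negbTE (inr_notin_old x B hx)) andbF.
Qed.

Lemma new_part_inl (h : {set W} -> nat) x :
  \sum_(y in V1 | inl_w x \in pnew y) h (pnew y) =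
  if deg e x == 1 then h (pnew x) else 0.
Proof.
rewrite (eq_bigl (fun y => (deg e x == 1) && (y == x))); last first.
  move=> y; rewrite !inE; case hy: (deg e y == 1) => /=.
    rewrite inl_neq_inr // orbF (inj_eq inl_inj).
    by case: (x =P y) => [->|/eqP]; rewrite ?hy ?eqxx // eq_sym => /negbTE ->; rewrite andbF.
  by case: (x =P y) => [->|/eqP nxy]; [rewrite hy | rewrite [y == x]eq_sym (negbTE nxy) andbF].
case: (deg e x == 1) => /=; first by rewrite big_pred1_eq.
by rewrite big_pred0.
Qed.

Lemma new_part_inr (h : {set W} -> nat) x : deg e x == 1 ->
  \sum_(y in V1 | inr_w x \in pnew y) h (pnew y) = h (pnew x).
Proof.
move=> hx; rewrite (eq_bigl (fun y => y == x)); first by rewrite big_pred1_eq.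
move=> y; rewrite !inE; case hy: (deg e y == 1) => /=.
  by rewrite eq_sym inl_neq_inr // inr_eq // eq_sym.
by case: (y =P x) => // E; move: hy; rewrite E hx.
Qed.

Lemma deg_inl x : deg (ext_rel e) (inl_w x) = deg e x + (if deg e x == 1 then 1 else 0).
Proof.
rewrite (deg_edges ext_sym ext_irr) -sum1_card.
rewrite (eq_bigl (fun A => (A \in edges (ext_rel e)) && (inl_w x \in A))); last by move=> A; rewrite inE.
rewrite sum_ext (old_part (fun _ => 1)) (new_part_inl (fun _ => 1)) /= (deg_edges e_sym e_irr) -sum1_card.
by congr (_ + _); apply: eq_bigl => A; rewrite inE.
Qed.

Lemma deg_inr x : deg e x == 1 -> deg (ext_rel e) (inr_w x) = 1.
Proof.
move=> hx; rewrite (deg_edges ext_sym ext_irr) -sum1_card.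
rewrite (eq_bigl (fun A => (A \in edges (ext_rel e)) && (inr_w x \in A))); last by move=> A; rewrite inE.
by rewrite sum_ext (old_part_inr (fun _ => 1)) // (new_part_inr (fun _ => 1)).
Qed.

Variable f : {set V} -> nat.
Hypothesis hf : strongly_antimagic_labeling e f.

Definition n1 := #|V1|.
Definition rk x := #|[set y | (deg e y == 1) && (vsum e f y <= vsum e f x)]|.
Definition gl (A : {set W}) : nat :=
  if [pick x | (deg e x == 1) && (A == pnew x)] is Some x then rk x
  else f (inl_w @^-1: A) + n1.

Lemma g_new x : deg e x == 1 -> gl (pnew x) = rk x.
Proof.
move=> hx; rewrite /gl; case: pickP => [y /andP [hy /eqP E]|/(_ x)].
  by rewrite (@pnew_inj x y) ?inE.
by rewrite hx eqxx.
Qed.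

Lemma g_old (B : {set V}) : gl (inl_w @: B) = f B + n1.
Proof.
rewrite /gl; case: pickP => [y /andP [hy /eqP E]|_].
  by have := inr_notin_old y B hy; rewrite E !inE eqxx orbT.
congr (f _ + _); apply/setP => x; rewrite inE (mem_imset _ _ inl_inj).
by [].
Qed.

Lemma rk_bounds x : deg e x == 1 -> 0 < rk x <= n1.
Proof.
move=> hx; apply/andP; split.
  by apply/card_gt0P; exists x; rewrite inE hx leqnn.
by apply: subset_leq_card; apply/subsetP => y; rewrite !inE => /andP [].
Qed.

Lemma rk_lt x y : deg e x == 1 -> deg e y == 1 -> vsum e f x < vsum e f y -> rk x < rk y.
Proof.
move=> hx hy lt; apply: proper_card; apply/properP; split.
  apply/subsetP => z; rewrite !inE => /andP [-> h] /=.
  by apply: leq_trans h (ltnW lt).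
by exists y; rewrite !inE hy ?leqnn // -ltnNge.
Qed.

Lemma rk_inj x y : deg e x == 1 -> deg e y == 1 -> rk x = rk y -> x = y.
Proof.
move=> hx hy E; apply/eqP; apply: contraT => nxy.
have [_ hd _] := hf.
have := hd _ _ nxy; case: ltngtP => // lt _.
  by have := rk_lt x y hx hy lt; rewrite E ltnn.
by have := rk_lt y x hy hx lt; rewrite E ltnn.
Qed.

Lemma vsum0 x : deg e x = 0 -> vsum e f x = 0.
Proof.
rewrite (deg_edges e_sym e_irr) => /card0_eq H.
rewrite /vsum big_pred0 // => A; have := H A; rewrite !inE => <-.
by [].
Qed.

Lemma vsum_inl x : vsum (ext_rel e) gl (inl_w x) =
  vsum e f x + deg e x * n1 + (if deg e x == 1 then rk x else 0).
Proof.
rewrite /vsum sum_ext old_part new_part_inl.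
rewrite (eq_bigr (fun B => f B + n1)); last by move=> B _; rewrite g_old.
rewrite big_split /=; congr (_ + _ + _).
  rewrite (deg_edges e_sym e_irr) -sum_nat_const.
  by apply: eq_bigl => A; rewrite inE.
by case: ifP => // hx; rewrite g_new.
Qed.

Lemma vsum_inr x : deg e x == 1 -> vsum (ext_rel e) gl (inr_w x) = rk x.
Proof.
by move=> hx; rewrite /vsum sum_ext old_part_inr // new_part_inr // g_new.
Qed.

Lemma card_ext : #|edges (ext_rel e)| = #|edges e| + n1.
Proof.
rewrite edgesE cardsU (disjoint_setI0 disj) cards0 subn0 /oldE /newE.
rewrite (card_in_imset (in2W (imset_inj inl_inj))).
by rewrite (card_in_imset pnew_inj).
Qed.

Lemma gl_labeling : is_labeling (ext_rel e) gl.
Proof.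
have [[finj frng _] _ _] := hf.
have rng : forall A, A \in edges (ext_rel e) -> 1 <= gl A <= #|edges (ext_rel e)|.
  move=> A; rewrite card_ext edgesE => /setUP [] /imsetP [B HB ->].
    by rewrite g_old; have := frng B HB; lia.
  by move: HB; rewrite inE => hB; rewrite g_new //; have := rk_bounds B hB; lia.
have inj : {in edges (ext_rel e) &, injective gl}.
  move=> A A'; rewrite !edgesE => /setUP [] /imsetP [B HB ->] /setUP [] /imsetP [B' HB' ->].
  - rewrite !g_old => E; have EB : B = B' by apply: (finj B B' HB HB'); lia.
    by rewrite EB.
  - move: HB'; rewrite inE => hB'; rewrite g_old g_new //.
    by have := frng B HB; have := rk_bounds B' hB'; lia.
  - move: HB; rewrite inE => hB; rewrite g_old g_new //.
    by have := frng B' HB'; have := rk_bounds B hB; lia.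
  - move: HB HB'; rewrite !inE => hB hB'; rewrite !g_new // => E.
    by rewrite (rk_inj B B' hB hB' E).
split => //; exact: surj_of_inj inj rng.
Qed.

Lemma key_mono u w : deg (ext_rel e) u < deg (ext_rel e) w ->
  vsum (ext_rel e) gl u < vsum (ext_rel e) gl w.
Proof.
have [_ hd hm] := hf.
case: (W_cases u) => [[x ->]|[x hx ->]]; case: (W_cases w) => [[y ->]|[y hy ->]].
- rewrite !deg_inl !vsum_inl.
  move: (hm x y) (rk_bounds x) (rk_bounds y).
  have [dx|dx] := eqVneq (deg e x) 1; have [dy|dy] := eqVneq (deg e y) 1;
    rewrite ?dx ?dy ?eqxx ?(negbTE dx) ?(negbTE dy) /=; nia.
- rewrite deg_inl vsum_inl deg_inr // vsum_inr //.
  move: (vsum0 x) (rk_bounds y hy).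
  have [dx|dx] := eqVneq (deg e x) 1;
    rewrite ?dx ?eqxx ?(negbTE dx) /=; nia.
- rewrite deg_inl vsum_inl deg_inr // vsum_inr //.
  move: (rk_bounds x hx) (rk_bounds y).
  have [dy|dy] := eqVneq (deg e y) 1;
    rewrite ?dy ?eqxx ?(negbTE dy) /=; nia.
- by rewrite !deg_inr.
Qed.

Lemma key_dist u w : u != w -> vsum (ext_rel e) gl u != vsum (ext_rel e) gl w.
Proof.
move=> nuw; case: (ltngtP (deg (ext_rel e) u) (deg (ext_rel e) w)) => H.
- by rewrite neq_ltn (key_mono u w H).
- by rewrite neq_ltn (key_mono w u H) orbT.
have [_ hd hm] := hf.
move: nuw H.
case: (W_cases u) => [[x ->]|[x hx ->]]; case: (W_cases w) => [[y ->]|[y hy ->]].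
- rewrite (inj_eq inl_inj) => nxy.
  rewrite !deg_inl !vsum_inl.
  move: (hd x y nxy) (hm x y) (hm y x) (rk_bounds x) (rk_bounds y) (rk_lt x y) (rk_lt y x).
  have [dx|dx] := eqVneq (deg e x) 1; have [dy|dy] := eqVneq (deg e y) 1;
    rewrite ?dx ?dy ?eqxx ?(negbTE dx) ?(negbTE dy) /=; nia.
- rewrite deg_inl deg_inr //.
  have [dx|dx] := eqVneq (deg e x) 1;
    rewrite ?dx ?eqxx ?(negbTE dx) /=; nia.
- rewrite deg_inl deg_inr //.
  have [dy|dy] := eqVneq (deg e y) 1;
    rewrite ?dy ?eqxx ?(negbTE dy) /=; nia.
- rewrite inr_eq // => nxy _; rewrite !vsum_inr //.
  by apply/eqP => E; move/eqP: nxy; apply; apply: rk_inj.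
Qed.

End Ext.

Theorem lemma1 (V : finType) (e : rel V)
  (e_sym : symmetric e) (e_irr : irreflexive e)
  (e_conn : forall x y : V, connect e x y)
  (V1_nonempty : exists v : V, deg e v = 1) :
  strongly_antimagic e -> strongly_antimagic (ext_rel e).
Proof.
case=> f hf; exists (@gl V e f); split.
- exact: gl_labeling.
- exact: key_dist.
- exact: key_mono.
Qed.
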